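(* Let $X$ be a random vector and $\epsilon$ a random variable, independent, and let $Y=h(X)+\epsilon$ for a Borel function $h$, where $\epsilon$ has a density with respect to Lebesgue measure on $\mathbb{R}$ and $X$ has a density with respect to a $\sigma$-finite Borel measure. Let $u_{h(X)}=\sup\{u: F_{h(X)}(u)<1\}$ and suppose the CDF of $h(X)$ is continuous on the interval $(u,u_{h(X)}]$ for some $u<u_{h(X)}$. Then \[ \lambda^{(\mathrm{opt})}(Y,X)=\limsup_{p\uparrow1}\mathbb{P}\big[Y>F_Y^{\leftarrow}(p)\,\big|\,h(X)>F_{h(X)}^{\leftarrow}(p)\big], \] so $h(X)$ is an optimal extremal predictor for the extreme events of $Y$. In particular, if the tail dependence coefficient $\lambda(Y,h(X))$ exists, then $\lambda^{(\mathrm{opt})}(Y,X)=\lambda(Y,h(X))$.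
   Context: $F_\xi$ is the CDF of $\xi$ and $F_\xi^{\leftarrow}(p)=\inf\{y:F_\xi(y)\ge p\}$. For $p\in(0,1)$, $\mathcal{C}_p(X)$ is the class of Borel functions $g$ with $\mathbb{P}[g(X)>F_{g(X)}^{\leftarrow}(p)]=1-p$. The optimal extremal precision is \[ \lambda^{(\mathrm{opt})}(Y,X)=\limsup_{p\uparrow1}\sup_{g\in\mathcal{C}_p(X)}\mathbb{P}\big(Y>F_Y^{\leftarrow}(p)\mid g(X)>F_{g(X)}^{\leftarrow}(p)\big). \] A random variable $h(X)$ is an optimal extremal predictor if $\lambda^{(\mathrm{opt})}(Y,X)=\limsup_{p\uparrow1}\mathbb{P}(Y>F_Y^{\leftarrow}(p)\mid h(X)>F_{h(X)}^{\leftarrow}(p))$. The tail dependence coefficient is $\lambda(\xi,\eta)=\lim_{p\uparrow1}\mathbb{P}[\xi>F_\xi^{\leftarrow}(p)\mid \eta>F_\eta^{\leftarrow}(p)]$ when the limit exists. *)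

(* Defs.v *)
From HB Require Import structures.
From mathcomp Require Import all_boot all_order all_algebra.
From mathcomp Require Import all_classical all_reals all_analysis.
Set Implicit Arguments. Unset Strict Implicit. Unset Printing Implicit Defensive.
Import Order.TTheory GRing.Theory Num.Theory.
Import numFieldNormedType.Exports.
Local Open Scope classical_set_scope.
Local Open Scope ring_scope.

Section defs.
Context {R : realType} {dT : measure_display} {T : measurableType dT}.
Variable P : probability T R.

Definition distr_fun (xi : T -> R) (y : R) : R := fine (P [set t | xi t <= y]).

Definition gen_inverse (xi : T -> R) (p : R) : R := inf [set y | p <= distr_fun xi y].

Definition exceed (xi : T -> R) (p : R) : set T :=
  [set t | gen_inverse xi p < xi t].

Definition condprob (A B : set T) : R := fine (P (A `&` B)) / fine (P B).

Definition upper_end (xi : T -> R) : \bar R :=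
  ereal_sup [set u%:E | u in [set u | distr_fun xi u < 1]].

Definition indep {d1 d2} {U1 : measurableType d1} {U2 : measurableType d2}
  (X1 : T -> U1) (X2 : T -> U2) : Prop :=
  forall (A : set U1) (B : set U2), measurable A -> measurable B ->
    P (X1 @^-1` A `&` X2 @^-1` B) = (P (X1 @^-1` A) * P (X2 @^-1` B))%E.

Definition has_density {d1} {U : measurableType d1} (Z : T -> U)
  (mu : {measure set U -> \bar R}) : Prop :=
  exists f : U -> R, measurable_fun setT f /\ (forall x, 0 <= f x) /\
    forall A, measurable A -> P (Z @^-1` A) = (\int[mu]_(x in A) (f x)%:E)%E.

Definition has_lebesgue_density (Z : T -> R) : Prop :=
  exists f : measurableTypeR R -> R, measurable_fun setT f /\ (forall x, 0 <= f x) /\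
    forall A : set (measurableTypeR R), measurable A ->
      P (Z @^-1` A) = (\int[@lebesgue_measure R]_(x in A) (f x)%:E)%E.

Definition Cp {d1} {U : measurableType d1} (X : T -> U) (p : R) : set (U -> R) :=
  [set g | measurable_fun setT g /\ fine (P (exceed (g \o X) p)) = 1 - p].

End defs.

Definition limsup_left1 {R : realType} (f : R -> \bar R) : \bar R :=
  ereal_inf [set ereal_sup (f @` [set p | 1 - δ < p < 1]) | δ in [set δ : R | 0 < δ < 1]].

Definition lambda_opt {R : realType} {dT} {T : measurableType dT} (P : probability T R)
  {d1} {U : measurableType d1} (Y : T -> R) (X : T -> U) : \bar R :=
  limsup_left1 (fun p => ereal_sup
    [set (condprob P (exceed P Y p) (exceed P (g \o X) p))%:E | g in Cp P X p]).

(* Main.v *)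
Require Import Defs.
From HB Require Import structures.
From mathcomp Require Import all_boot all_order all_algebra.
From mathcomp Require Import all_classical all_reals all_analysis.
From mathcomp Require Import lra measurable_realfun.
Import Order.TTheory GRing.Theory Num.Theory.
Import numFieldNormedType.Exports.
Local Open Scope classical_set_scope.
Local Open Scope ring_scope.
Lemma mu_split {R : realType} {dT : measure_display} {T : measurableType dT}
  (P : probability T R) {A B} : measurable A -> measurable B ->
  fine (P A) = fine (P (A `&` B)) + fine (P (A `&` ~` B)).
Proof.
move=> mA mB; rewrite (measureDI P mA mB) setDE.
have mAB : measurable (A `&` B) by exact: measurableI.
have mAnB : measurable (A `&` ~` B) by apply: measurableI => //; exact: measurableC.
rewrite fineD ?fin_num_measure// addrC //.
Qed.
Lemma mu_le {R : realType} {dT : measure_display} {T : measurableType dT}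
  (P : probability T R) {A B} : measurable A -> measurable B -> A `<=` B -> fine (P A) <= fine (P B).
Proof.
move=> mA mB AB; rewrite fine_le ?fin_num_measure//; by apply: le_measure; rewrite ?inE.
Qed.
Lemma mlt {R : realType} {d} {U : measurableType d} (f : U -> R) a :
  measurable_fun setT f -> measurable [set x | a < f x].
Proof.
by move=> mf; have := mf measurableT _ (measurable_itv `]a,+oo[); rewrite setTI preimage_itvoy.
Qed.
Lemma mle {R : realType} {d} {U : measurableType d} (f : U -> R) a :
  measurable_fun setT f -> measurable [set x | f x <= a].
Proof.
by move=> mf; have := mf measurableT _ (measurable_itv `]-oo,a]); rewrite setTI preimage_itvNyc.
Qed.
Lemma muE {R : realType} {dT : measure_display} {T : measurableType dT}
  (P : probability T R) A : measurable A -> (fine (P A))%:E = P A.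
Proof. by move=> mA; rewrite fineK// fin_num_measure. Qed.

Lemma np_ineq {R : realType} {dT : measure_display} {T : measurableType dT}
  (P : probability T R) {d} {U : measurableType d} (X : T -> U) (eps : T -> R) (h g : U -> R) q c qg :
  measurable_fun setT X -> measurable_fun setT eps -> measurable_fun setT h -> measurable_fun setT g ->
  indep P X eps ->
  fine (P [set t | qg < g (X t)]) = fine (P [set t | c < h (X t)]) ->
  fine (P ([set t | q < h (X t) + eps t] `&` [set t | qg < g (X t)])) <=
  fine (P ([set t | q < h (X t) + eps t] `&` [set t | c < h (X t)])).
Proof.
move=> mX meps mh mg ind hAB.
set E := [set t | q < h (X t) + eps t].
set G := [set x | qg < g x]; set H := [set x | c < h x].
set D := `]q - c, +oo[%classic.
have mG : measurable G by exact: mlt.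
have mH : measurable H by exact: mlt.
have mD : measurable D by exact: measurable_itv.
have mE : measurable E.
  apply: (mlt (fun t => h (X t) + eps t)); apply: measurable_funD => //.
  exact: measurableT_comp.
have mXS S : measurable S -> measurable (X @^-1` S).
  by move=> mS; have := mX measurableT _ mS; rewrite setTI.
have mepsD : measurable (eps @^-1` D).
  by have := meps measurableT _ mD; rewrite setTI.
have mA := mXS _ mG; have mB := mXS _ mH.
change [set t | qg < g (X t)] with (X @^-1` G) in hAB |- *.
change [set t | c < h (X t)] with (X @^-1` H) in hAB |- *.
have mCG : measurable (~` G) by exact: measurableC.
have mCH : measurable (~` H) by exact: measurableC.
have s1 := mu_split P (measurableI _ _ mE mA) mB.
have s2 := mu_split P (measurableI _ _ mE mB) mA.
have s6a := mu_split P mA mB.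
have s6b := mu_split P mB mA.
have e1 : E `&` X @^-1` H `&` X @^-1` G = E `&` X @^-1` G `&` X @^-1` H by rewrite setIAC.
have e2 : X @^-1` H `&` X @^-1` G = X @^-1` G `&` X @^-1` H by rewrite setIC.
rewrite e1 in s2; rewrite e2 in s6b.
have s3 : fine (P (E `&` X @^-1` G `&` ~` X @^-1` H)) <=
          fine (P (X @^-1` (G `&` ~` H) `&` eps @^-1` D)).
  apply: mu_le.
  - by apply: measurableI => //; [exact: measurableI| exact: measurableC].
  - apply: measurableI => //; apply: mXS; exact: measurableI.
  move=> t [[/= Et Gt] nHt]; split => //.
  rewrite /D /= in_itv /= andbT.
  have : h (X t) <= c by rewrite leNgt; apply/negP.
  rewrite /E /= in Et; lra.
have s5 : fine (P (X @^-1` (~` G `&` H) `&` eps @^-1` D)) <=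
          fine (P (E `&` X @^-1` H `&` ~` X @^-1` G)).
  apply: mu_le.
  - apply: measurableI => //; apply: mXS; exact: measurableI.
  - by apply: measurableI => //; [exact: measurableI| exact: measurableC].
  move=> t [[/= nGt Ht]]; rewrite /D /= in_itv /= andbT => Dt; split => //; split => //.
  rewrite /E /=; rewrite /H /= in Ht; lra.
have i1 : fine (P (X @^-1` (G `&` ~` H) `&` eps @^-1` D)) =
          fine (P (X @^-1` (G `&` ~` H))) * fine (P (eps @^-1` D)).
  rewrite ind//; last exact: measurableI.
  by rewrite fineM// fin_num_measure//; apply: mXS; exact: measurableI.
have i2 : fine (P (X @^-1` (~` G `&` H) `&` eps @^-1` D)) =
          fine (P (X @^-1` (~` G `&` H))) * fine (P (eps @^-1` D)).
  rewrite ind//; last exact: measurableI.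
  by rewrite fineM// fin_num_measure//; apply: mXS; exact: measurableI.
have c1 : X @^-1` (G `&` ~` H) = X @^-1` G `&` ~` X @^-1` H by [].
have c2 : X @^-1` (~` G `&` H) = X @^-1` H `&` ~` X @^-1` G by rewrite setIC.
rewrite c1 in i1 s3; rewrite c2 in i2 s5.
have eq : fine (P (X @^-1` G `&` ~` X @^-1` H)) = fine (P (X @^-1` H `&` ~` X @^-1` G)).
  lra.
rewrite eq in i1.
rewrite s1 s2; lra.
Qed.

Lemma limsup_le {R : realType} (f f' : R -> \bar R) p0 : p0 < 1 ->
  (forall p, p0 < p -> p < 1 -> f p = f' p) ->
  (limsup_left1 f <= limsup_left1 f')%E.
Proof.
move=> p01 ff'; apply: le_ereal_inf_tmp => _ [d /andP[d0 d1] <-].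
set d' := Num.min d (1 - p0).
have d'0 : 0 < d' by rewrite lt_min d0 subr_gt0.
have d'd : d' <= d by rewrite ge_min lexx.
have d'p : d' <= 1 - p0 by rewrite ge_min lexx orbT.
apply: (@le_trans _ _ (ereal_sup (f @` [set p | 1 - d' < p < 1]))).
  apply: ereal_inf_lbound; exists d' => //; apply/andP; split => //; lra.
have -> : f @` [set p | 1 - d' < p < 1] = f' @` [set p | 1 - d' < p < 1].
  apply/seteqP; split => _ [p /andP[p1 p2] <-]; exists p; rewrite ?ff' //=;
    rewrite ?p1 ?p2 //; lra.
apply: ereal_sup_le => _ [p /andP[p1 p2] <-]; exists p => //; apply/andP; split => //; lra.
Qed.

Lemma limsup_eq {R : realType} (f f' : R -> \bar R) p0 : p0 < 1 ->
  (forall p, p0 < p -> p < 1 -> f p = f' p) ->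
  limsup_left1 f = limsup_left1 f'.
Proof.
move=> p01 ff'; apply/eqP; rewrite eq_le; apply/andP; split.
  exact: (@limsup_le _ f f' p0 p01 ff').
by apply: (@limsup_le _ f' f p0 p01) => p a b; rewrite ff'.
Qed.

Lemma left_near {R : realType} {f : R -> R} {l : R} :
  f p @[p --> 1^'-] --> l -> forall e, 0 < e ->
  exists2 d, 0 < d < 1 & forall p, 1 - d < p -> p < 1 -> `|l - f p| < e.
Proof.
move=> fl e e0; have := (cvgrPdist_lt _ _).1 fl e e0.
case=> d /= d0 H.
exists (Num.min d (1/2)).
  by rewrite lt_min d0 /= gt_min; apply/andP; split; [|apply/orP; right]; lra.
move=> p p1 p2; apply: H => //; rewrite /ball_ /= ger0_norm; last lra.
have : Num.min d (1/2) <= d by rewrite ge_min lexx.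
lra.
Qed.

Lemma limsup_cvg {R : realType} (f : R -> R) (l : R) :
  f p @[p --> 1^'-] --> l -> limsup_left1 (fun p => (f p)%:E) = l%:E.
Proof.
move=> fl.
set L := limsup_left1 _.
have up e : 0 < e -> (L <= (l + e)%:E)%E.
  move=> e0; have [d /andP[d0 d1] H] := left_near fl e e0.
  apply: (@le_trans _ _ (ereal_sup ((fun p => (f p)%:E) @` [set p | 1 - d < p < 1]))).
    by apply: ereal_inf_lbound; exists d => //; apply/andP.
  apply: ge_ereal_sup => _ [p /andP[p1 p2] <-]; rewrite lee_fin.
  by have := H p p1 p2; rewrite ltr_norml => /andP[]; lra.
have lo e : 0 < e -> ((l - e)%:E <= L)%E.
  move=> e0; have [d /andP[d0 d1] H] := left_near fl e e0.
  apply: le_ereal_inf_tmp => _ [δ /andP[δ0 δ1] <-].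
  have m1 : Num.min δ d <= δ by rewrite ge_min lexx.
  have m2 : Num.min δ d <= d by rewrite ge_min lexx orbT.
  have m0 : 0 < Num.min δ d by rewrite lt_min δ0 d0.
  set p := 1 - Num.min δ d / 2.
  apply: (@le_trans _ _ (f p)%:E); last first.
    by apply: ereal_sup_ubound; exists p => //; apply/andP; split; rewrite /p; lra.
  rewrite lee_fin; have := H p _ _; rewrite /p.
  by rewrite ltr_norml => /(_ _ _)/andP[]; lra.
clearbody L; move: up lo; case: L => [r| |] up lo.
- congr EFin; apply/eqP; rewrite eq_le; apply/andP; split.
    by apply/ler_addgt0Pr => e e0; have := up e e0; rewrite lee_fin.
  by apply/ler_addgt0Pr => e e0; have := lo e e0; rewrite lee_fin; lra.
- by have := up 1 ltr01; rewrite leNgt ltey.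
- by have := lo 1 ltr01; rewrite leNgt ltNye.
Qed.

Lemma hinv_good {R : realType} {dT : measure_display} {T : measurableType dT}
  (P : probability T R) (Z : T -> R) u :
  measurable_fun setT Z ->
  (u%:E < upper_end P Z)%E ->
  (forall x, u < x -> (x%:E <= upper_end P Z)%E -> {for x, continuous (distr_fun P Z)}) ->
  exists2 p0, p0 < 1 & forall p, p0 < p -> p < 1 -> fine (P (exceed P Z p)) = 1 - p.
Proof.
move=> mZ uU cont.
set F := distr_fun P Z.
have mS y : measurable [set t | Z t <= y] := mle _ y mZ.
have Fmono y y' : y <= y' -> F y <= F y'.
  move=> yy'; apply: mu_le => // t /= Zt; exact: le_trans Zt yy'.
have [_ [w /= Fw <-] uv] := ereal_sup_gt uU.
rewrite lte_fin in uv.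
exists (F w) => // p p0 p1.
set S := [set y | p <= F y].
have Sne : S !=set0.
  have Zin : Z \in mfun by rewrite inE.
  pose ZR : {RV P >-> R} := mfun_Sub Zin.
  have p1' : (p%:E < 1)%E by rewrite lte_fin.
  have := cvg_cdfy1 ZR (open_ereal_gt' p1').
  case=> M [_ HM]; exists (M + 1).
  have := HM (M + 1) ltac:(lra).
  rewrite /cdf /distribution /pushforward /= preimage_itvNyc.
  by rewrite /S /F /distr_fun /= -(muE P _ (mS _)) lte_fin => /ltW.
have Slb : lbound S w.
  move=> y Sy; rewrite leNgt; apply/negP => yw.
  have := Fmono _ _ (ltW yw); rewrite /S /= in Sy; lra.
have Shas : has_lbound S by exists w.
have -> : exceed P Z p = [set t | inf S < Z t] by [].
set c := inf S.
have wc : w <= c := lb_le_inf Sne Slb.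
have notS y : y < c -> F y < p.
  move=> yc; rewrite ltNge; apply/negP => Sy.
  have := ge_inf Shas Sy; rewrite -/c; lra.
have ub y : F y < 1 -> (y%:E <= upper_end P Z)%E.
  by move=> Fy; apply: ereal_sup_ubound; exists y.
have wU := ub w Fw.
have cU : (c%:E <= upper_end P Z)%E.
  rewrite leNgt; apply/negP; move: wU ub; case: (upper_end P Z) => [r| |] //.
  move=> wr ubr; rewrite lte_fin => rc.
  have := ubr ((r + c) / 2); rewrite lee_fin => H.
  have : (r + c) / 2 <= r by apply: H; have := notS ((r + c) / 2) ltac:(lra); lra.
  lra.
have uc : u < c by lra.
have cc := cont c uc cU.
have Fc_ge : p <= F c.
  rewrite leNgt; apply/negP => Fcp.
  have e0 : 0 < p - F c by lra.
  have := (cvgrPdist_lt _ _).1 cc _ e0; case=> d /= d0 H.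
  have cd : c < c + d / 2 by lra.
  have [s Ss sc] := inf_lt Sne cd.
  have cs : c <= s := ge_inf Shas Ss.
  have := H s; rewrite /ball_ /= distrC ger0_norm; last lra.
  move=> /(_ ltac:(lra)); rewrite /S /= in Ss.
  rewrite ltr_norml => /andP[]; rewrite -/F; lra.
have Fc_le : F c <= p.
  rewrite leNgt; apply/negP => pFc.
  have e0 : 0 < F c - p by lra.
  have := (cvgrPdist_lt _ _).1 cc _ e0; case=> d /= d0 H.
  have := notS (c - d / 2) ltac:(lra).
  have := H (c - d / 2); rewrite /ball_ /= ger0_norm; last lra.
  move=> /(_ ltac:(lra)).
  rewrite ltr_norml => /andP[]; rewrite -/F; lra.
have Fc : F c = p by apply/eqP; rewrite eq_le Fc_ge Fc_le.
have -> : [set t | c < Z t] = ~` [set t | Z t <= c].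
  by apply/seteqP; split => t /=; rewrite ltNge => /negP.
rewrite probability_setC // -(muE P _ (mS c)) -EFinB /=.
by rewrite -Fc.
Qed.

Theorem theorem3 (R : realType) (dT : measure_display) (T : measurableType dT)
  (P : probability T R) (n : nat)
  (X : T -> n.-tuple R) (eps : T -> R) (h : n.-tuple R -> R) :
  measurable_fun setT X -> measurable_fun setT eps -> measurable_fun setT h ->
  indep P X eps ->
  has_lebesgue_density P eps ->
  (exists mu : {measure set (n.-tuple R) -> \bar R},
      sigma_finite setT mu /\ has_density P X mu) ->
  (exists u : R, (u%:E < upper_end P (h \o X))%E /\
     forall x : R, u < x -> (x%:E <= upper_end P (h \o X))%E ->
       {for x, continuous (distr_fun P (h \o X))}) ->
  lambda_opt P (fun t => h (X t) + eps t) X =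
    limsup_left1 (fun p => (condprob P (exceed P (fun t => h (X t) + eps t) p)
                                      (exceed P (h \o X) p))%:E)
  /\
  (forall l : R,
     condprob P (exceed P (fun t => h (X t) + eps t) p) (exceed P (h \o X) p)
       @[p --> 1^'-] --> l ->
     lambda_opt P (fun t => h (X t) + eps t) X = l%:E).
Proof.
move=> mX meps mh ind _ _ [u [uU cont]].
have mhX : measurable_fun setT (h \o X) := measurableT_comp mh mX.
have [p0 p01 Hp] := hinv_good P _ _ mhX uU cont.
have key p : p0 < p -> p < 1 ->
  ereal_sup [set (condprob P (exceed P (fun t => h (X t) + eps t) p) (exceed P (g \o X) p))%:E
            | g in Cp P X p] =
  (condprob P (exceed P (fun t => h (X t) + eps t) p) (exceed P (h \o X) p))%:E.
  move=> pp0 p1.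
  have hP := Hp p pp0 p1.
  have hC : Cp P X p h by split.
  apply/eqP; rewrite eq_le; apply/andP; split.
  - apply: ge_ereal_sup => _ [g [mg gP] <-]; rewrite lee_fin.
    rewrite /condprob gP hP; apply: ler_wpM2r; first by rewrite invr_ge0; lra.
    apply: (np_ineq P X eps h g _ _ _ mX meps mh mg ind).
    by rewrite -[LHS]/(fine (P (exceed P (g \o X) p))) gP -hP.
  - by apply: ereal_sup_ubound; exists h.
have part1 : lambda_opt P (fun t => h (X t) + eps t) X =
    limsup_left1 (fun p => (condprob P (exceed P (fun t => h (X t) + eps t) p)
                                      (exceed P (h \o X) p))%:E).
  rewrite /lambda_opt; apply: (@limsup_eq _ _ _ p0 p01) => p pp0 p1; exact: key.
split => // l hl; rewrite part1; exact: limsup_cvg hl.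
Qed.
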